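(* Let $2\le k<n$ (with $n-k\ge2$... as needed for the objects to be defined), let $\mathcal{V}=[\mathcal{T}^{(1)},\ldots,\mathcal{T}^{(n)}]$ be a one-parameter array of type $(k,n)$ on $\{1,\ldots,n\}$, and let $\mathcal{V}^*$ be a one-parameter array of type $(n-k,n)$ dual to $\mathcal{V}$, i.e. $\mathcal{F}(\mathcal{V})=\mathcal{F}(\mathcal{V}^* )$ under the relabeling $s_I\leftrightarrow s_{\{1,\ldots,n\}\setminus I}$. Then for every $i=1,\ldots,n$, the hard limit $\mathcal{T}^{(i)}$ (an array of type $(k-1,n-1)$ on $\{1,\ldots,n\}\setminus\{i\}$) is dual to the soft limit $\tilde{\mathcal{V}}^*_i$ (an array of type $(n-k,n-1)$ on $\{1,\ldots,n\}\setminus\{i\}$).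
   Context: Labels carry the cyclic order $1<\cdots<n$. A planar Feynman diagram on a label set $L$ is a tree with leaves labelled by $L$, internal vertices of degree at least 3, planar for the induced cyclic order, with nonnegative internal edge lengths, giving a tree metric $d_{ab}$. For a label set $N$ with $|N|=n$ and $2\le k<n$, an array of type $(k,n)$ on $N$ assigns to every $(k-2)$-subset $\{i_1,\ldots,i_{k-2}\}\subseteq N$ a planar Feynman diagram $\mathcal{V}_{i_1\ldots i_{k-2}}$ on $N\setminus\{i_1,\ldots,i_{k-2}\}$ with metric $d^{(i_1\ldots i_{k-2})}_{ab}$, such that $\pi_{i_1\ldots i_k}:=d^{(i_1\ldots i_{k-2})}_{i_{k-1}i_k}$ is totally symmetric. Metrics are considered modulo $\pi_I\sim\pi_I+\sum_{i\in I}w_i$. A one-parameter array (ray) has metric $x\,V$ for a fixed tensor $V$ and one parameter $x>0$. Kinematic invariants of type $(k,n)$ on $N$ are real numbers $s_I$, one for each $k$-subset $I\subseteq N$, satisfying momentum conservation $\sum_{I\ni j}s_I=0$ for every $j\in N$. For a ray $\mathcal{V}$ with tensor $V$ set $\mathcal{F}(\mathcal{V}):=\sum_{|I|=k}s_I V_I$, a linear function of the kinematic invariants (well defined modulo $\sim$ thanks to momentum conservation). A ray $\mathcal{V}$ of type $(k,n)$ and a ray $\mathcal{V}^*$ of type $(n-k,n)$ on $N$ are dual if $\mathcal{F}(\mathcal{V})$ and $\mathcal{F}(\mathcal{V}^* )$ agree as functions on kinematic space after identifying $s_I$ with $s_{N\setminus I}$. Hard limit (column) on label $i$: $\mathcal{T}^{(i)}$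 is the array of type $(k-1,n-1)$ on $N\setminus\{i\}$ with $\mathcal{T}^{(i)}_{i_2\ldots i_{k-2}}:=\mathcal{V}_{i\,i_2\ldots i_{k-2}}$. Soft limit on label $i$: $\tilde{\mathcal{V}}_i$ is the array of type $(k,n-1)$ on $N\setminus\{i\}$ whose entries are the $\mathcal{V}_J$ with $i\notin J$, with the leaf $i$ removed from each diagram. *)

(* Defs.v *)
From HB Require Import structures.
From mathcomp Require Import all_boot all_order all_algebra.
From mathcomp Require Import reals.

Set Implicit Arguments.
Unset Strict Implicit.
Unset Printing Implicit Defensive.
Import Order.TTheory GRing.Theory Num.Theory.
Local Open Scope ring_scope.

(* Labels are the elements of 'I_n (i.e. 0 < 1 < ... < n-1, standing for
   1 < ... < n), with the cyclic order induced by the natural order.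
   A label set is a subset L : {set 'I_n}. *)

Section Diagrams.
Variable R : realType.
Variable n : nat.

Definition lin_interval (L A : {set 'I_n}) : bool :=
  [forall a, forall b, forall c,
     [&& a \in L, b \in L, c \in L, (a < b)%N, (b < c)%N, a \in A & c \in A]
       ==> (b \in A)].

Definition cyc_interval (L A : {set 'I_n}) : bool :=
  lin_interval L A || lin_interval L (L :\: A).

Definition is_min (L : {set 'I_n}) (x : 'I_n) : bool :=
  (x \in L) && [forall y in L, (x <= y)%N].

(* A split A | L\A is represented by its side not containing min L. *)
Definition normalized (L A : {set 'I_n}) : bool :=
  [forall x, is_min L x ==> (x \notin A)].

Definition norm_side (L C : {set 'I_n}) : {set 'I_n} :=
  if [exists x in C, is_min L x] then L :\: C else C.

(* nontrivial split of L, i.e. an internal edge of a tree with leaf set L *)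
Definition nontriv (L A : {set 'I_n}) : bool :=
  [&& A \subset L, (2 <= #|A|)%N & (2 <= #|L :\: A|)%N].

Definition compatible (L A B : {set 'I_n}) : bool :=
  [|| A :&: B == set0, A :&: (L :\: B) == set0,
      (L :\: A) :&: B == set0 | (L :\: A) :&: (L :\: B) == set0].

(* A (planar, metric) Feynman diagram, encoded by its split system
   (Buneman): [lam A] is the length of the internal edge inducing the
   split A | L\A (0 if there is no such edge), [pend a] the length of the
   leaf edge at a. *)
Record diagram := Diagram {
  lam : {set 'I_n} -> R;
  pend : 'I_n -> R
}.

(* D is a planar Feynman diagram on the label set L: its internal edges
   are pairwise compatible nontrivial splits of L that are cyclic
   intervals (planarity), with nonnegative lengths. *)
Definition planar_diagram (L : {set 'I_n}) (D : diagram) : Prop :=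
  (forall A, 0 <= lam D A) /\
  (forall A, lam D A != 0 ->
     [&& nontriv L A, cyc_interval L A & normalized L A]) /\
  (forall A B, lam D A != 0 -> lam D B != 0 -> compatible L A B).

Definition dist (D : diagram) (a b : 'I_n) : R :=
  if a == b then 0 else
  pend D a + pend D b +
  \sum_(A : {set 'I_n}) (if (a \in A) != (b \in A) then lam D A else 0).

(* An array assigns a diagram to every subset J (only the (k-2)-subsets
   J of N matter). *)
Definition array := {set 'I_n} -> diagram.

Definition is_array (N : {set 'I_n}) (k : nat) (V : array) : Prop :=
  [/\ (2 <= k)%N, (k < #|N|)%N,
      (forall J : {set 'I_n}, J \subset N -> #|J| = (k - 2)%N ->
                 planar_diagram (N :\: J) (V J)) &
      (forall I : {set 'I_n}, I \subset N -> #|I| = k ->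
       forall a b c d, a \in I -> b \in I -> c \in I -> d \in I ->
         a != b -> c != d ->
         dist (V (I :\: [set a; b])) a b = dist (V (I :\: [set c; d])) c d)].

(* the tensor pi_I = d^{(I \ {a,b})}_{ab} (well defined by symmetry) *)
Definition tensor (V : array) (I : {set 'I_n}) : R :=
  match [pick a in I] with
  | Some a =>
      match [pick b in I :\ a] with
      | Some b => dist (V (I :\: [set a; b])) a b
      | None => 0
      end
  | None => 0
  end.

Definition momentum (N : {set 'I_n}) (k : nat) (s : {set 'I_n} -> R) : Prop :=
  forall j, j \in N ->
    \sum_(I : {set 'I_n} | [&& I \subset N, #|I| == k & j \in I]) s I = 0.

Definition Fsum (N : {set 'I_n}) (k : nat) (V : array)
    (s : {set 'I_n} -> R) : R :=
  \sum_(I : {set 'I_n} | (I \subset N) && (#|I| == k)) s I * tensor V I.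

Definition dual (N : {set 'I_n}) (k : nat) (V Vs : array) : Prop :=
  [/\ is_array N k V, is_array N (#|N| - k) Vs &
      forall s, momentum N k s ->
        Fsum N k V s = Fsum N (#|N| - k) Vs (fun J => s (N :\: J))].

Definition hard (V : array) (i : 'I_n) : array := fun J => V (i |: J).

(* removing leaf i from a diagram on L (suppressing the degree-2 vertex:
   edges whose splits coincide after removal are merged, internal edges
   that become trivial are merged into the corresponding leaf edge) *)
Definition remove_leaf (L : {set 'I_n}) (i : 'I_n) (D : diagram) : diagram :=
  let L' := L :\ i in
  Diagram
    (fun B => if nontriv L' B then
                \sum_(A : {set 'I_n} | norm_side L' (A :\ i) == B) lam D A
              else 0)
    (fun j => pend D j +
       \sum_(A : {set 'I_n} |
               (A :\ i == [set j]) || ((L :\: A) :\ i == [set j])) lam D A).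

Definition soft (N : {set 'I_n}) (V : array) (i : 'I_n) : array :=
  fun J => remove_leaf (N :\: J) i (V J).

End Diagrams.

(* Main.v *)
Require Import Defs.
From HB Require Import structures.
From mathcomp Require Import all_boot all_order all_algebra.
From mathcomp Require Import reals.
From mathcomp Require Import ring zify.
Set Implicit Arguments.
Unset Strict Implicit.
Unset Printing Implicit Defensive.
Import Order.TTheory GRing.Theory Num.Theory.
Local Open Scope ring_scope.



Lemma disj_sub (T : finType) (X Y X' Y' : {set T}) :
  X' \subset X -> Y' \subset Y -> X :&: Y == set0 -> X' :&: Y' == set0.
Proof.
move=> s1 s2; rewrite -!subset0 => h; exact: subset_trans (setISS s1 s2) h.
Qed.

Lemma compat_restr n (L A B : {set 'I_n}) i :
  compatible L A B -> compatible (L :\ i) (A :\ i) (B :\ i).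
Proof.
have s1 : forall X : {set 'I_n}, X :\ i \subset X by move=> X; apply: subD1set.
have s2 : forall X : {set 'I_n}, (L :\ i) :\: (X :\ i) \subset L :\: X.
  by move=> X; apply/subsetP => x; rewrite !inE; case: (x == i) => //=.
rewrite /compatible => /or4P [] h; apply/or4P.
- by constructor 1; exact: disj_sub h.
- by constructor 2; exact: disj_sub h.
- by constructor 3; exact: disj_sub h.
- by constructor 4; exact: disj_sub h.
Qed.

Lemma compat_sym n (L A B : {set 'I_n}) : compatible L A B -> compatible L B A.
Proof.
rewrite /compatible => /or4P [] /eqP h; apply/or4P.
- by constructor 1; rewrite setIC h.
- by constructor 3; rewrite setIC h.
- by constructor 2; rewrite setIC h.
- by constructor 4; rewrite setIC h.
Qed.

Lemma setDDK n (L C : {set 'I_n}) : C \subset L -> L :\: (L :\: C) = C.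
Proof.
move/subsetP=> sC; apply/setP => x; rewrite !inE.
by have:= sC x; case: (x \in C); case: (x \in L) => // /(_ isT).
Qed.

Lemma compat_compl n (L C D : {set 'I_n}) : C \subset L ->
  compatible L C D -> compatible L (L :\: C) D.
Proof.
move=> sC; rewrite /compatible setDDK // => /or4P [] h; apply/or4P.
- by constructor 3.
- by constructor 4.
- by constructor 1.
- by constructor 2.
Qed.

Lemma norm_side_sub n (L C : {set 'I_n}) : C \subset L -> norm_side L C \subset L.
Proof. by rewrite /norm_side; case: ifP => // _ _; apply: subsetDl. Qed.

Lemma compat_ns n (L C D : {set 'I_n}) : C \subset L -> D \subset L ->
  compatible L C D -> compatible L (norm_side L C) (norm_side L D).
Proof.
move=> sC sD h.
have h1 : compatible L (norm_side L C) D.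
  by rewrite /norm_side; case: ifP => _ //; apply: compat_compl.
apply: compat_sym; rewrite /norm_side; case: ifP => _; last exact: compat_sym.
by apply: compat_compl => //; apply: compat_sym.
Qed.

Lemma lin_restr n (L A : {set 'I_n}) i :
  lin_interval L A -> lin_interval (L :\ i) (A :\ i).
Proof.
move=> H; apply/forallP => a; apply/forallP => b; apply/forallP => c; apply/implyP.
move/forallP: H => /(_ a) /forallP /(_ b) /forallP /(_ c) /implyP H.
rewrite !inE.
move=> /andP[/andP[_ aL] /andP[/andP[bi bL] /andP[/andP[_ cL] /andP[ab /andP[bc /andP[/andP[_ aA] /andP[_ cA]]]]]]].
by rewrite bi /=; apply: H; rewrite aL bL cL ab bc aA cA.
Qed.

Lemma cyc_restr n (L A : {set 'I_n}) i :
  cyc_interval L A -> cyc_interval (L :\ i) (A :\ i).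
Proof.
have e : (L :\ i) :\: (A :\ i) = (L :\: A) :\ i.
  by apply/setP => x; rewrite !inE; case: (x == i).
rewrite /cyc_interval e => /orP [] h; apply/orP; [left|right]; exact: lin_restr.
Qed.

Lemma cyc_ns n (L C : {set 'I_n}) : C \subset L ->
  cyc_interval L C -> cyc_interval L (norm_side L C).
Proof.
move=> sC; rewrite /norm_side; case: ifP => // _.
by rewrite /cyc_interval setDDK // orbC.
Qed.

Lemma is_min_uniq n (L : {set 'I_n}) x y : is_min L x -> is_min L y -> x = y.
Proof.
move=> /andP[xL /forallP hx] /andP[yL /forallP hy].
move: (hx y) (hy x); rewrite xL yL /= => h1 h2; apply: val_inj => /=.
by apply/eqP; rewrite eqn_leq h1 h2.
Qed.

Lemma normalized_ns n (L C : {set 'I_n}) : normalized L (norm_side L C).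
Proof.
apply/forallP => x; apply/implyP => mx; rewrite /norm_side; case: ifP.
  move=> /existsP [y /andP [yC my]]; by rewrite (is_min_uniq mx my) !inE yC.
by move=> /negbT; rewrite negb_exists => /forallP /(_ x); rewrite mx andbT.
Qed.



Lemma rl_planar (R : realType) n (L : {set 'I_n}) i (D : diagram R n) :
  planar_diagram L D -> planar_diagram (L :\ i) (remove_leaf L i D).
Proof.
case=> [h0 [h1 h2]].
have ex : forall B, lam (remove_leaf L i D) B != 0 ->
   nontriv (L :\ i) B /\ exists2 A, norm_side (L :\ i) (A :\ i) == B & lam D A != 0.
  move=> B /=; case: ifP => [nt|]; last by rewrite eqxx.
  move=> nz; split => //.
  case: (pickP (fun A => (norm_side (L :\ i) (A :\ i) == B) && (lam D A != 0)))
    => [A /andP[e nz']|none]; first by exists A.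
  move: nz; rewrite big1 ?eqxx // => A e; move: (none A); rewrite e /=.
  by move/negbFE/eqP.
have sub : forall A, lam D A != 0 -> A :\ i \subset L :\ i.
  by move=> A /h1 /and3P [/and3P [sA _ _] _ _]; apply: setSD.
split; first by move=> B /=; case: ifP => // _; apply: sumr_ge0 => A _; exact: h0.
split.
  move=> B /ex [nt [A /eqP eB nz]]; move: nt; rewrite -eB => nt.
  move: (h1 A nz) => /and3P [_ cA _].
  by rewrite nt normalized_ns andbT cyc_ns ?sub //; apply: cyc_restr.
move=> B1 B2 /ex [_ [A1 /eqP <- nz1]] /ex [_ [A2 /eqP <- nz2]].
apply: compat_ns; try exact: sub.
by apply: compat_restr; apply: h2.
Qed.



Lemma set1_eqE (T : finType) (x y : T) : ([set x] == [set y]) = (x == y).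
Proof.
apply/eqP/eqP => [e|-> //]; have: x \in [set y] by rewrite -e set11.
by move/set1P.
Qed.

Lemma rl_dist (R : realType) n (L : {set 'I_n}) i (D : diagram R n) a b :
  planar_diagram L D -> (2 < #|L :\ i|)%N -> a \in L :\ i -> b \in L :\ i ->
  dist (remove_leaf L i D) a b = dist D a b.
Proof.
move=> [h0 [h1 _]] cL aL bL.
rewrite /dist; case: eqP => // /eqP ab /=.
set L' := L :\ i.
set f := fun A : {set 'I_n} => norm_side L' (A :\ i).
have part : \sum_(B : {set 'I_n}) (if (a \in B) != (b \in B) then
     (if nontriv L' B then \sum_(A | norm_side L' (A :\ i) == B) lam D A else 0) else 0)
  = \sum_(A : {set 'I_n}) (if ((a \in f A) != (b \in f A)) && nontriv L' (f A)
                            then lam D A else 0).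
  rewrite [RHS](partition_big f xpredT) //=; apply: eq_bigr => B _.
  rewrite [RHS](eq_bigr (fun A => if ((a \in B) != (b \in B)) && nontriv L' B
                             then lam D A else 0)); last by move=> A /eqP <-.
  case: ((a \in B) != (b \in B)); case: (nontriv L' B) => //=; rewrite big1 //.
rewrite part.
suff key : \sum_(A | (A :\ i == [set a]) || ((L :\: A) :\ i == [set a])) lam D A
   + \sum_(A | (A :\ i == [set b]) || ((L :\: A) :\ i == [set b])) lam D A
   + \sum_(A : {set 'I_n}) (if ((a \in f A) != (b \in f A)) && nontriv L' (f A)
                            then lam D A else 0)
   = \sum_(A : {set 'I_n}) (if (a \in A) != (b \in A) then lam D A else 0).
  by rewrite -key; ring.
rewrite (big_mkcond (fun A => (A :\ i == [set a]) || _))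
        (big_mkcond (fun A => (A :\ i == [set b]) || _)) -!big_split /=.
apply: eq_bigr => A _.
case: (eqVneq (lam D A) 0) => [->|nz]; first by rewrite !if_same !addr0.
move: (h1 A nz) => /and3P [/and3P [sA cA cLA] _ _].
set C := A :\ i.
have sC : C \subset L' by apply: setSD.
have eC' : (L :\: A) :\ i = L' :\: C.
  by apply/setP => x; rewrite !inE; case: (x == i).
have memC : forall x, x \in L' -> (x \in A) = (x \in C).
  by move=> x; rewrite !inE => /andP [-> _].
have sepf : ((a \in f A) != (b \in f A)) = ((a \in C) != (b \in C)).
  rewrite /f /norm_side -/C; case: ifP => _ //.
  have := aL; have := bL; rewrite !inE => /andP[-> ->] /andP[-> ->] /=.
  by case: (a \in A); case: (b \in A).
have ntf : nontriv L' (f A) = nontriv L' C.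
  rewrite /f /norm_side -/C; case: ifP => _ //.
  by rewrite /nontriv setDDK // subsetDl sC /= andbC.
have c1 : (1 <= #|C|)%N.
  by move: (cardsD1 i A) cA; rewrite -/C => ->; case: (i \in A); rewrite ?add1n ?add0n // => /ltnW.
have c2 : (1 <= #|L' :\: C|)%N.
  by move: (cardsD1 i (L :\: A)) cLA; rewrite eC' => ->; case: (i \in _); rewrite ?add1n ?add0n // => /ltnW.
have c3 : (#|C| + #|L' :\: C| = #|L'|)%N.
  by rewrite -(cardsID C L') (setIidPr sC).
rewrite sepf ntf eC' (memC a aL) (memC b bL).
case nt: (nontriv L' C).
  move: nt => /and3P [_ c4 c5].
  have nsa : forall x, (C == [set x]) = false.
    by move=> x; apply/negbTE; apply/eqP => e; move: c4; rewrite e cards1.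
  have nsb : forall x, (L' :\: C == [set x]) = false.
    by move=> x; apply/negbTE; apply/eqP => e; move: c5; rewrite e cards1.
  by rewrite !nsa !nsb /= !add0r andbT.
rewrite andbF addr0.
move: nt; rewrite /nontriv sC /= => /negbT; rewrite negb_and -!ltnNge => /orP [h|h].
  have /cards1P [x ex] : #|C| == 1%N by rewrite eqn_leq c1 -ltnS h.
  have nsb : forall y, (L' :\: C == [set y]) = false.
    move=> y; apply/negbTE; apply/eqP => e.
    by move: c3 cL; rewrite e ex cards1 !cards1 => <-.
  rewrite !nsb ex !set1_eqE !inE !orbF.
  have hx : ~~ ((x == a) && (x == b)).
    by apply/andP => [[/eqP e1 /eqP e2]]; move: ab; rewrite -e1 -e2 eqxx.
  rewrite (eq_sym a) (eq_sym b); move: hx.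
  by case: (x == a); case: (x == b) => //= _; rewrite ?addr0 ?add0r.
have /cards1P [x ex] : #|L' :\: C| == 1%N by rewrite eqn_leq c2 -ltnS h.
have nsa : forall y, (C == [set y]) = false.
  move=> y; apply/negbTE; apply/eqP => e.
  by move: c3 cL; rewrite ex e !cards1 => <-.
have mC : forall y, y \in L' -> (y \in C) = (y != x).
  move=> y yL; move/setP: (ex) => /(_ y).
  by rewrite in_setD in_set1 yL andbT => <-; rewrite negbK.
rewrite !nsa ex !set1_eqE (mC a aL) (mC b bL) /=.
have hx : ~~ ((x == a) && (x == b)).
  by apply/andP => [[/eqP e1 /eqP e2]]; move: ab; rewrite -e1 -e2 eqxx.
rewrite (eq_sym a) (eq_sym b); move: hx.
by case: (x == a); case: (x == b) => //= _; rewrite ?addr0 ?add0r.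
Qed.



Lemma ar_succ (m k : nat) : (1 <= k)%N -> (m.+1 == k) = (m == k - 1)%N.
Proof. move=> h; apply/eqP/eqP; lia. Qed.

Lemma two_elems (T : finType) (I : {set T}) : (1 < #|I|)%N ->
  exists a b, [/\ a \in I, b \in I & a != b].
Proof.
move=> h; have /card_gt0P [a aI] : (0 < #|I|)%N by apply: ltnW.
have : (0 < #|I :\ a|)%N by move: h; rewrite (cardsD1 a I) aI.
case/card_gt0P => b; rewrite in_setD1 => /andP [ba bI].
by exists a, b; split => //; rewrite eq_sym.
Qed.

Lemma card_D2 (T : finType) (I : {set T}) x y : x \in I -> y \in I -> x != y ->
  #|I :\: [set x; y]| = (#|I| - 2)%N.
Proof.
move=> xI yI xy; rewrite cardsD (setIidPr _) ?cards2 ?xy //.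
by apply/subsetP => z /set2P [] ->.
Qed.

Lemma card_compl n (X : {set 'I_n}) : #|[set: 'I_n] :\: X| = (n - #|X|)%N.
Proof.
have h := cardsC X; rewrite card_ord in h.
have h2 := max_card (mem X); rewrite card_ord in h2.
by rewrite setTD; apply/eqP; rewrite -(eqn_add2l #|X|) h subnKC.
Qed.

Lemma tensorE (R : realType) n (V : array R n) (I : {set 'I_n}) (a b : 'I_n) :
  a \in I -> b \in I -> a != b ->
  (forall c d, c \in I -> d \in I -> c != d ->
     dist (V (I :\: [set c; d])) c d = dist (V (I :\: [set a; b])) a b) ->
  tensor V I = dist (V (I :\: [set a; b])) a b.
Proof.
move=> aI bI ab H; rewrite /tensor; case: pickP => [c cI|/(_ a)]; last by rewrite aI.
case: pickP => [d|none].
  by rewrite in_setD1 => /andP [dc dI]; apply: H; rewrite // eq_sym.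
case: (eqVneq a c) => [ac|ac].
  by move: (none b); rewrite in_setD1 bI -ac eq_sym ab.
by move: (none a); rewrite in_setD1 aI ac.
Qed.

Lemma reidx (R : realType) n (i : 'I_n) (P : pred {set 'I_n}) (F : {set 'I_n} -> R) :
  \sum_(I | P I && (i \in I)) F I = \sum_(I | P (i |: I) && (i \notin I)) F (i |: I).
Proof.
rewrite (reindex_onto (fun I => i |: I) (fun I => I :\ i)); last first.
  by move=> I /andP [_ iI]; apply: setD1K.
apply: eq_bigl => I; rewrite setU11 andbT; congr (_ && _).
apply/eqP/idP => [<-|iI]; first by rewrite !inE eqxx.
exact: setU1K.
Qed.

Lemma sum_mom_zero (R : realType) n (N : {set 'I_n}) m (s : {set 'I_n} -> R) :
  (0 < m)%N -> momentum N m s ->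
  \sum_(I : {set 'I_n} | (I \subset N) && (#|I| == m)) s I = 0.
Proof.
move=> m0 ms.
have : m%:R * \sum_(I : {set 'I_n} | (I \subset N) && (#|I| == m)) s I = 0.
  rewrite mulr_sumr.
  transitivity (\sum_(I : {set 'I_n} | (I \subset N) && (#|I| == m)) \sum_(j in I) s I).
    apply: eq_bigr => I /andP [_ /eqP cI].
    by rewrite sumr_const cI mulr_natl.
  rewrite (exchange_big_dep (fun j => j \in N)) /=; last first.
    by move=> I j /andP [/subsetP sI _] /sI.
  rewrite big1 // => j jN; apply: etrans (ms j jN); apply: eq_bigl => I.
  by rewrite andbA.
move/eqP; rewrite mulf_eq0 pnatr_eq0 => /orP [/eqP m0'|/eqP //].
by move: m0; rewrite m0'.
Qed.



Lemma ar_sd (n k c : nat) : (k + 2 <= n)%N -> (2 <= k)%N ->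
  (n - (n - k - 2))%N = (1 + c)%N -> (2 < c)%N.
Proof. lia. Qed.

Lemma soft_dist (R : realType) n k (Vs : array R n) i (J : {set 'I_n}) x y :
  (forall J0 : {set 'I_n}, J0 \subset [set: 'I_n] -> #|J0| = (n - k - 2)%N ->
     planar_diagram ([set: 'I_n] :\: J0) (Vs J0)) ->
  (k + 2 <= n)%N -> (2 <= k)%N -> i \notin J -> #|J| = (n - k)%N ->
  x \in J -> y \in J -> x != y ->
  dist (soft [set: 'I_n] Vs i (J :\: [set x; y])) x y
  = dist (Vs (J :\: [set x; y])) x y.
Proof.
move=> pl kn k2 iJ cJ xJ yJ xy; rewrite /soft.
have cX : #|J :\: [set x; y]| = (n - k - 2)%N by rewrite card_D2 // cJ.
have xi : x != i by apply: contraNneq iJ => <-.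
have yi : y != i by apply: contraNneq iJ => <-.
apply: rl_dist.
- by apply: pl => //; apply: subsetT.
- have := cardsD1 i ([set: 'I_n] :\: (J :\: [set x; y])).
  rewrite card_compl cX !inE (negbTE iJ) andbF /=.
  exact: ar_sd.
- by rewrite !inE xi eqxx.
- by rewrite !inE yi eqxx orbT.
Qed.



Lemma ar1 (k : nat) : (3 <= k)%N -> (2 <= k - 1)%N. Proof. lia. Qed.
Lemma ar2 (n k : nat) : (3 <= k)%N -> (k + 2 <= n)%N -> (k - 1 < n - 1)%N. Proof. lia. Qed.
Lemma ar3 (k : nat) : (3 <= k)%N -> (1 + (k - 1 - 2) = k - 2)%N. Proof. lia. Qed.
Lemma ar4 (k : nat) : (3 <= k)%N -> (1 + (k - 1) = k)%N. Proof. lia. Qed.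
Lemma ar5 (n k : nat) : (3 <= k)%N -> (k + 2 <= n)%N -> (n - 1 - (k - 1) = n - k)%N. Proof. lia. Qed.
Lemma ar6 (n k : nat) : (3 <= k)%N -> (k + 2 <= n)%N -> (2 <= n - k)%N. Proof. lia. Qed.
Lemma ar7 (n k : nat) : (3 <= k)%N -> (k + 2 <= n)%N -> (n - k < n - 1)%N. Proof. lia. Qed.
Lemma ar8 (k : nat) : (3 <= k)%N -> (0 < k - 1)%N. Proof. lia. Qed.
Lemma ar9 (k : nat) : (3 <= k)%N -> (1 < k - 1)%N. Proof. lia. Qed.

Theorem theorem3p1 (R : realType) (n k : nat) (V Vs : array R n) :
  (3 <= k)%N -> (k + 2 <= n)%N ->
  dual [set: 'I_n] k V Vs ->
  forall i : 'I_n,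
    dual ([set: 'I_n] :\ i) (k - 1) (hard V i) (soft [set: 'I_n] Vs i).
Proof.
move=> k3 kn [[_ _ Vpl Vsym] [_ _ Vspl Vssym] HF] i.
have k2 : (2 <= k)%N by apply: ltnW.
have cT : #|[set: 'I_n]| = n by rewrite cardsT card_ord.
rewrite cT in Vspl Vssym HF.
set N' := [set: 'I_n] :\ i.
have cN' : #|N'| = (n - 1)%N.
  have h := cardsD1 i [set: 'I_n]; rewrite cT in_setT in h.
  by rewrite [in RHS]h addKn.
have iN : forall I : {set 'I_n}, I \subset N' -> i \notin I.
  by move=> I; rewrite /N' subsetD1 => /andP [].
have e2 : forall (I : {set 'I_n}) (x y : 'I_n), i \notin I -> x \in I -> y \in I ->
    i |: (I :\: [set x; y]) = (i |: I) :\: [set x; y].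
  move=> I x y iI xI yI; have xi : i != x by apply: contraNneq iI => ->.
  have yi : i != y by apply: contraNneq iI => ->.
  apply/setP => z; rewrite !inE; case: (eqVneq z i) => [->|] //=.
  by rewrite (negbTE xi) (negbTE yi).
have hsym : forall I : {set 'I_n}, I \subset N' -> #|I| = (k - 1)%N ->
   forall a b c d, a \in I -> b \in I -> c \in I -> d \in I -> a != b -> c != d ->
   dist (hard V i (I :\: [set a; b])) a b = dist (hard V i (I :\: [set c; d])) c d.
  move=> I sI cI a b c d aI bI cI' dI ab cd.
  have iI := iN I sI.
  rewrite /hard !e2 //; apply: Vsym => //; rewrite ?subsetT ?in_setU1 ?aI ?bI ?cI' ?dI ?orbT //.
  by rewrite cardsU1 iI cI ar4.
have softd : forall (J : {set 'I_n}) (x y : 'I_n), i \notin J -> #|J| = (n - k)%N -> x \in J -> y \in J ->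
    x != y -> dist (soft [set: 'I_n] Vs i (J :\: [set x; y])) x y
              = dist (Vs (J :\: [set x; y])) x y.
  by move=> J x y; apply: soft_dist.
split.
- split.
  + exact: ar1.
  + by rewrite cN'; apply: ar2.
  + move=> J sJ cJ; have iJ := iN J sJ.
    have e : [set: 'I_n] :\: (i |: J) = N' :\: J.
      by apply/setP => z; rewrite /N' !inE; case: (z == i); case: (z \in J).
    rewrite /hard -e; apply: Vpl; first exact: subsetT.
    by rewrite cardsU1 iJ cJ ar3.
  + exact: hsym.
- rewrite cN' ar5 //; split.
  + exact: ar6.
  + by rewrite cN'; apply: ar7.
  + move=> J sJ cJ; have iJ := iN J sJ; rewrite /soft.
    have e : ([set: 'I_n] :\: J) :\ i = N' :\: J.
      by apply/setP => z; rewrite /N' !inE; case: (z == i); case: (z \in J).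
    rewrite -e; apply: rl_planar; apply: Vspl => //; exact: subsetT.
  + move=> I sI cI a b c d aI bI cI' dI ab cd.
    rewrite !softd //; try exact: iN.
    by apply: Vssym => //; exact: subsetT.
- move=> s' ms'.
  pose s := fun I : {set 'I_n} => if i \in I then s' (I :\ i) else 0.
  have ms : momentum [set: 'I_n] k s.
    move=> j _; rewrite (bigID (fun I : {set 'I_n} => i \in I)) /= [X in _ + X]big1 ?addr0;
      last by move=> I /andP [_ /negbTE iI]; rewrite /s iI.
    rewrite (reidx i (fun I => [&& I \subset [set: 'I_n], #|I| == k & j \in I])) /=.
    rewrite (eq_bigr (fun I => s' I)); last first.
      by move=> I /andP [_ iI]; rewrite /s setU11 setU1K.
    case: (eqVneq j i) => [->|ji].
      rewrite (eq_bigl (fun I : {set 'I_n} => (I \subset N') && (#|I| == (k - 1)%N))).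
        by apply: sum_mom_zero => //; apply: ar8.
      move=> I; rewrite /N' subsetD1 !subsetT cardsU1 setU11 /=.
      by case: (i \in I); rewrite /= ?andbF // add1n ar_succ // ?andbT // ltnW.
    rewrite (eq_bigl (fun I : {set 'I_n} => [&& I \subset N', #|I| == (k - 1)%N & j \in I])).
      by apply: ms'; rewrite /N' !inE ji.
    move=> I; rewrite /N' subsetD1 !subsetT cardsU1 in_setU1 (negbTE ji) /=.
    by case: (i \in I); rewrite /= ?andbF // add1n ar_succ // ?andbT // ltnW.
  have := HF s ms; rewrite /Fsum => HF'.
  rewrite /Fsum; apply: etrans _ (etrans HF' _).
  + symmetry; rewrite (bigID (fun I : {set 'I_n} => i \in I)) /= [X in _ + X]big1 ?addr0;
      last by move=> I /andP [_ /negbTE iI]; rewrite /s iI mul0r.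
    rewrite (reidx i (fun I => (I \subset [set: 'I_n]) && (#|I| == k))) /=.
    apply: eq_big => I.
      rewrite /N' subsetD1 !subsetT cardsU1 /=.
      by case: (i \in I); rewrite /= ?andbF // add1n ar_succ // ?andbT // ltnW.
    move=> /andP [/andP [_ /eqP cU] iI].
    have sI : I \subset N' by rewrite /N' subsetD1 subsetT iI.
    have cI : #|I| = (k - 1)%N.
      by apply/eqP; rewrite -(ar_succ _ (ltnW (ltnW k3))) -cU cardsU1 iI.
    rewrite /s setU11 setU1K //; congr (_ * _).
    have c1 : (1 < #|I|)%N by rewrite cI; apply: ar9.
    have [a [b [aI bI ab]]] := two_elems c1.
    rewrite (tensorE (a := a) (b := b)) ?in_setU1 ?aI ?bI ?orbT //; last first.
      move=> c d cI' dI cd; apply: Vsym => //.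
      by rewrite in_setU1 aI orbT.
      by rewrite in_setU1 bI orbT.
    rewrite (tensorE (a := a) (b := b)) //; last first.
      by move=> c d cI' dI cd; apply: hsym.
    by rewrite /hard e2.
  + rewrite (bigID (fun J : {set 'I_n} => i \in J)) /= big1 ?add0r;
      last by move=> J /andP [_ iJ]; rewrite /s !inE iJ /= mul0r.
    apply: eq_big => J.
      rewrite /N' subsetD1 !subsetT cN' ar5 //.
      by case: (i \in J); rewrite /= ?andbF ?andbT.
    move=> /andP [/andP [_ /eqP cJ] iJ].
    have e : ([set: 'I_n] :\: J) :\ i = N' :\: J.
      by apply/setP => z; rewrite /N' !inE; case: (z == i); case: (z \in J).
    rewrite /s !inE iJ /= e; congr (_ * _).
    rewrite /tensor; case: pickP => // a aJ; case: pickP => // b.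
    rewrite in_setD1 => /andP [ba bJ].
    by rewrite softd // eq_sym.
Qed.
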